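(* Let $(F_n)$ be the Fibonacci numbers ($F_0=0$, $F_1=1$, $F_{n+2}=F_{n+1}+F_n$), $(E_n)$ the sequence with $E_0=0$, $E_1=E_2=1$, $E_{n+3}=E_n+E_{n+2}$, and $(D_n)$ the sequence with $D_0=1$, $D_1=D_2=0$, $D_{n+3}=D_n+D_{n+1}$ (all indexed by $\mathbb Z$). Then for every fixed integer $k\ge 0$, $$\lim_{n\to+\infty}(E_{n-k}-D_n)=\lim_{n\to+\infty}(F_{n-k}-E_n)=+\infty.$$ *)

(* Defs.v *)
From Stdlib Require Import ZArith Reals.
From Coquelicot Require Import Coquelicot.
Open Scope Z_scope.

Fixpoint Fib (n : nat) : Z :=
  match n with
  | O => 0
  | S O => 1
  | S ((S m) as p) => Fib p + Fib m
  end.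

Fixpoint Eseq (n : nat) : Z :=
  match n with
  | O => 0
  | S O => 1
  | S (S O) => 1
  | S ((S (S m)) as q) => Eseq m + Eseq q
  end.

Fixpoint Dseq (n : nat) : Z :=
  match n with
  | O => 1
  | S O => 0
  | S (S O) => 0
  | S (S ((S m) as p)) => Dseq m + Dseq p
  end.

(* Main.v *)
Require Import Defs.
From Stdlib Require Import ZArith Reals Lra Lia.
From Coquelicot Require Import Coquelicot.

Open Scope R_scope.

Lemma Erec n : Eseq (S (S (S n))) = (Eseq n + Eseq (S (S n)))%Z.
Proof. reflexivity. Qed.
Lemma Drec n : Dseq (S (S (S n))) = (Dseq n + Dseq (S n))%Z.
Proof. reflexivity. Qed.
Lemma Frec n : Fib (S (S n)) = (Fib (S n) + Fib n)%Z.
Proof. reflexivity. Qed.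

Lemma E_low n : (7/5)^n / 2 <= IZR (Eseq (S n)).
Proof.
  assert (H : forall n, (7/5)^n / 2 <= IZR (Eseq (S n)) /\
     (7/5)^(S n) / 2 <= IZR (Eseq (S (S n))) /\
     (7/5)^(S (S n)) / 2 <= IZR (Eseq (S (S (S n))))).
  { induction n0 as [|m [H0 [H1 H2]]].
    - simpl. repeat split; lra.
    - repeat split; try assumption.
      rewrite (Erec (S m)), plus_IZR.
      assert (0 <= (7/5)^m) by (apply pow_le; lra).
      cbn [pow] in *. lra. }
  apply H.
Qed.

Lemma E_up n : IZR (Eseq n) <= (3/2)^n.
Proof.
  assert (H : forall n, IZR (Eseq n) <= (3/2)^n /\
     IZR (Eseq (S n)) <= (3/2)^(S n) /\
     IZR (Eseq (S (S n))) <= (3/2)^(S (S n))).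
  { induction n0 as [|m [H0 [H1 H2]]].
    - simpl. repeat split; lra.
    - repeat split; try assumption.
      rewrite (Erec m), plus_IZR.
      assert (0 <= (3/2)^m) by (apply pow_le; lra).
      cbn [pow] in *. lra. }
  apply H.
Qed.

Lemma D_up n : IZR (Dseq n) <= (4/3)^n.
Proof.
  assert (H : forall n, IZR (Dseq n) <= (4/3)^n /\
     IZR (Dseq (S n)) <= (4/3)^(S n) /\
     IZR (Dseq (S (S n))) <= (4/3)^(S (S n))).
  { induction n0 as [|m [H0 [H1 H2]]].
    - simpl. repeat split; lra.
    - repeat split; try assumption.
      rewrite (Drec m), plus_IZR.
      assert (0 <= (4/3)^m) by (apply pow_le; lra).
      cbn [pow] in *. lra. }
  apply H.
Qed.

Lemma F_low n : (8/5)^n / 2 <= IZR (Fib (S n)).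
Proof.
  assert (H : forall n, (8/5)^n / 2 <= IZR (Fib (S n)) /\
     (8/5)^(S n) / 2 <= IZR (Fib (S (S n)))).
  { induction n0 as [|m [H0 H1]].
    - simpl. repeat split; lra.
    - split; try assumption.
      rewrite (Frec (S m)), plus_IZR.
      assert (0 <= (8/5)^m) by (apply pow_le; lra).
      cbn [pow] in *. lra. }
  apply H.
Qed.

Lemma lim_diff (A B p q : R) : 0 < A -> 1 < q -> q < p ->
  is_lim_seq (fun m => A * p^m - B * q^m) p_infty.
Proof.
  intros HA Hq Hp.
  apply is_lim_seq_ext with (fun m => q^m * (A * (p/q)^m + (- B))).
  { intros m. replace (p^m) with ((p/q)^m * q^m).
    - ring.
    - rewrite <- Rpow_mult_distr. f_equal. field. lra. }
  eapply is_lim_seq_mult.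
  - apply is_lim_seq_geom_p; lra.
  - eapply is_lim_seq_plus.
    + eapply is_lim_seq_scal_l. apply is_lim_seq_geom_p.
      apply Rlt_gt. apply (Rmult_lt_reg_r q); [lra|]. field_simplify; lra.
    + apply is_lim_seq_const.
    + unfold is_Rbar_plus; simpl. destruct (Rle_dec 0 A) as [r|r]; [destruct (Rle_lt_or_eq_dec 0 A r)|]; try (exfalso; lra); simpl; reflexivity.
  - simpl. reflexivity.
Qed.

Theorem theorem13 (k : nat) :
  is_lim_seq (fun n : nat => IZR (Eseq (n - k) - Dseq n)) p_infty /\
  is_lim_seq (fun n : nat => IZR (Fib (n - k) - Eseq n)) p_infty.
Proof.
  split.
  - apply (is_lim_seq_incr_n _ (S k)).
    eapply is_lim_seq_le_p_loc.
    2: apply (lim_diff (1/2) ((4/3)^(S k)) (7/5) (4/3)); lra.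
    exists 0%nat; intros n _. cbv beta.
    replace (n + S k - k)%nat with (S n) by lia.
    rewrite minus_IZR.
    pose proof (E_low n). pose proof (D_up (n + S k)).
    rewrite pow_add, Rmult_comm in H0. lra.
  - apply (is_lim_seq_incr_n _ (S k)).
    eapply is_lim_seq_le_p_loc.
    2: apply (lim_diff (1/2) ((3/2)^(S k)) (8/5) (3/2)); lra.
    exists 0%nat; intros n _. cbv beta.
    replace (n + S k - k)%nat with (S n) by lia.
    rewrite minus_IZR.
    pose proof (F_low n). pose proof (E_up (n + S k)).
    rewrite pow_add, Rmult_comm in H0. lra.
Qed.
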